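(* Let $\mathcal D=(D,<,\rho)$ be a computable partially ordered set. There exists $U\in\mathrm{Max}_{\mathrm{PR}}[\{0,1\}^*\to\mathcal D]$ such that for every $F\in\mathrm{Max}_{\mathrm{PR}}[\{0,1\}^*\to\mathcal D]$ there is a constant $c$ with $K_U(d)\le K_F(d)+c$ for every $d$ in the range of $F$.
   Context: A computable partially ordered set is a triple $\mathcal D=(D,<,\rho)$ where $\rho:\mathbb N\to D$ is a bijection and $<$ is a strict partial order on $D$ with $\{(m,n):\rho(m)<\rho(n)\}$ computable; a partial function into $D$ is partial computable if its composition with $\rho^{-1}$ is. For a partial $f:\{0,1\}^*\times\mathbb N\to D$ monotone increasing in its second argument on its domain, $\max^{\mathcal D}f$ is the partial function defined exactly at those $p$ for which $\{f(p,t):t\in\mathbb N,\ f(p,t)\text{ defined}\}$ is finite and non-empty, with value its maximum element. $\mathrm{Max}_{\mathrm{PR}}[\{0,1\}^*\to\mathcal D]$ is the class of all $\max^{\mathcal D}f$ with $f$ partial computable and monotone increasing in its second argument. For a partial $\varphi:\{0,1\}^*\to D$, $K_\varphi:D\to\mathbb N$ is the partial function $K_\varphi(d)=\min\{|p|:\varphi(p)=d\}$, defined on the range of $\varphi$. *)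

(* Defs.v *)
From Stdlib Require Import Arith List.
Import ListNotations.

Inductive prf : Type :=
| PZero : prf
| PSucc : prf
| PProj : nat -> prf               (* i-th argument (0 if out of range) *)
| PComp : prf -> list prf -> prf
| PPrec : prf -> prf -> prf
| PMu   : prf -> prf.

Inductive eval : prf -> list nat -> nat -> Prop :=
| eZero v : eval PZero v 0
| eSucc x v : eval PSucc (x :: v) (S x)
| eProj i v : eval (PProj i) v (nth i v 0)
| eComp f gs v ys y : evals gs v ys -> eval f ys y -> eval (PComp f gs) v y
| ePrec0 f g v y : eval f v y -> eval (PPrec f g) (0 :: v) y
| ePrecS f g n v r y :
    eval (PPrec f g) (n :: v) r -> eval g (n :: r :: v) y ->
    eval (PPrec f g) (S n :: v) y
| eMu f v n :
    eval f (n :: v) 0 ->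
    (forall m, m < n -> exists k, k <> 0 /\ eval f (m :: v) k) ->
    eval (PMu f) v n
with evals : list prf -> list nat -> list nat -> Prop :=
| esNil v : evals [] v []
| esCons g gs v y ys : eval g v y -> evals gs v ys -> evals (g :: gs) v (y :: ys).

Definition npair (x y : nat) : nat := (x + y) * (x + y + 1) / 2 + y.

Fixpoint bcode (s : list bool) : nat :=
  match s with
  | [] => 0
  | b :: s' => 2 * bcode s' + 1 + (if b then 1 else 0)
  end.

Record computable_poset (D : Type) (lt : D -> D -> Prop) (rho : nat -> D) : Prop := {
  cp_irrefl : forall x, ~ lt x x;
  cp_trans : forall x y z, lt x y -> lt y z -> lt x z;
  cp_inj : forall m n, rho m = rho n -> m = n;
  cp_surj : forall d, exists n, rho n = d;
  cp_dec : exists e : prf, forall m n,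
      (lt (rho m) (rho n) -> eval e [npair m n] 1) /\
      (~ lt (rho m) (rho n) -> eval e [npair m n] 0)
}.

(** Partial functions are represented as option-valued functions.
    f : {0,1}^* x N -> D is partial computable iff rho^{-1} o f is
    computed by some mu-recursive term (on the coded input). *)
Definition pc2 {D : Type} (rho : nat -> D)
  (f : list bool -> nat -> option D) : Prop :=
  exists e : prf, forall p t n,
    eval e [npair (bcode p) t] n <-> f p t = Some (rho n).

Definition monotone2 {D : Type} (lt : D -> D -> Prop)
  (f : list bool -> nat -> option D) : Prop :=
  forall p t t' d d', t <= t' -> f p t = Some d -> f p t' = Some d' ->
    d = d' \/ lt d d'.

Definition is_maxD {D : Type} (lt : D -> D -> Prop)
  (f : list bool -> nat -> option D) (F : list bool -> option D) : Prop :=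
  forall p d, F p = Some d <->
    ((exists l : list D, forall d', (exists t, f p t = Some d') <-> In d' l) /\
     (exists t, f p t = Some d) /\
     (forall d', (exists t, f p t = Some d') -> d' = d \/ lt d' d)).

Definition MaxPR {D : Type} (lt : D -> D -> Prop) (rho : nat -> D)
  (F : list bool -> option D) : Prop :=
  exists f, pc2 rho f /\ monotone2 lt f /\ is_maxD lt f F.

Definition KC {D : Type} (phi : list bool -> option D) (d : D) (k : nat) : Prop :=
  (exists p, phi p = Some d /\ length p = k) /\
  (forall p, phi p = Some d -> k <= length p).

(* Main.v *)
Require Import Defs.
From Stdlib Require Import Arith List.
From Stdlib Require Import Lia Classical ClassicalEpsilon.
Import ListNotations.

Fixpoint det e v y (H : eval e v y) {struct H} : forall y', eval e v y' -> y = y'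
with dets gs v ys (H : evals gs v ys) {struct H} : forall ys', evals gs v ys' -> ys = ys'.
Proof.
- destruct H as [v|x v|i v|f gs v ys y Hs Hf|f g v y Hf|f g n v r y Hr Hg|f v n H0 Hall];
  intros y' H'; inversion H'; subst; try reflexivity.
  + assert (ys = ys0) by (eapply dets; eauto). subst. eapply det; eauto.
  + eapply det; eauto.
  + assert (r = r0) by (eapply det; eauto). subst. eapply det; eauto.
  + match goal with Hb : forall m, m < y' -> _ |- _ => rename Hb into Hall' end.
    destruct (lt_eq_lt_dec n y') as [[Hl|He]|Hl]; auto.
    * destruct (Hall' n Hl) as [k [Hk Hk']]. exfalso. apply Hk. symmetry. exact (det _ _ _ H0 _ Hk').
    * destruct (Hall y' Hl) as [k [Hk Hk']]. exfalso. apply Hk. match goal with Hz : eval f (y' :: v) 0 |- _ => exact (det _ _ _ Hk' _ Hz) end.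
- destruct H as [v|g gs v y ys Hg Hs]; intros ys' H'; inversion H'; subst; auto.
  f_equal; [eapply det|eapply dets]; eauto.
Qed.
Definition a (j : nat) (v : list nat) : nat := nth j v 0.
Definition spec (e : prf) (F : list nat -> nat) : Prop := forall v, eval e v (F v).

Lemma spec_ext e F G : spec e F -> (forall v, F v = G v) -> spec e G.
Proof. intros H E v. rewrite <- E. apply H. Qed.

Lemma spec_Z : spec PZero (fun _ => 0).
Proof. intro v. constructor. Qed.
Lemma spec_P j : spec (PProj j) (a j).
Proof. intro v. constructor. Qed.

Lemma evals_map gs Gs : Forall2 spec gs Gs -> forall v, evals gs v (map (fun G => G v) Gs).
Proof. induction 1; intro v; simpl; constructor; auto. Qed.

Lemma spec_C f F gs Gs : spec f F -> Forall2 spec gs Gs ->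
  spec (PComp f gs) (fun v => F (map (fun G => G v) Gs)).
Proof. intros Hf Hg v. econstructor. apply evals_map; eauto. apply Hf. Qed.

Definition precf (F G : list nat -> nat) (x : nat) (w : list nat) : nat :=
  nat_rect (fun _ => nat) (F w) (fun n r => G (n :: r :: w)) x.

Lemma eval_prec f g F G : spec f F -> spec g G -> forall x w, eval (PPrec f g) (x :: w) (precf F G x w).
Proof. intros Hf Hg x w. induction x; simpl. constructor; apply Hf. econstructor. apply IHx. apply Hg. Qed.

Definition wrap (k : nat) (p : prf) : prf := PComp p (map PProj (seq 0 k)).

Lemma map_a_seq k v : map (fun G => G v) (map (fun j => a j) (seq 0 k)) = map (fun j => a j v) (seq 0 k).
Proof. rewrite map_map. reflexivity. Qed.

Lemma spec_prec k f g F G : spec f F -> spec g G ->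
  spec (wrap (S k) (PPrec f g)) (fun v => precf F G (a 0 v) (map (fun j => a j v) (seq 1 k))).
Proof.
  intros Hf Hg v. unfold wrap. econstructor.
  - assert (Forall2 spec (map PProj (seq 0 (S k))) (map (fun j => a j) (seq 0 (S k)))).
    { induction (seq 0 (S k)); simpl; constructor; auto. apply spec_P. }
    pose proof (evals_map _ _ H v). rewrite map_a_seq in H0. exact H0.
  - simpl. rewrite <- seq_shift, map_map. apply eval_prec; auto.
Qed.

Lemma spec_mu f F M : spec f F ->
  (forall v, F (M v :: v) = 0 /\ forall m, m < M v -> F (m :: v) <> 0) -> spec (PMu f) M.
Proof.
  intros Hf HM v. destruct (HM v) as [H1 H2]. constructor.
  - rewrite <- H1. apply Hf.
  - intros m Hm. exists (F (m :: v)). split; auto.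
Qed.

Lemma spec_det e F v n : spec e F -> eval e v n -> n = F v.
Proof. intros H H'. eapply det; eauto. Qed.

Ltac synth := match goal with
 | |- spec (PComp _ _) _ => eapply spec_C; [synth | synths]
 | |- spec (PProj _) _ => apply spec_P
 | |- spec PZero _ => apply spec_Z
 | |- spec _ _ => solve [eauto with spec]
 end
with synths := match goal with
 | |- Forall2 spec [] _ => constructor
 | |- Forall2 spec (_ :: _) _ => constructor; [synth | synths]
 end.

Create HintDb spec.

Ltac mk d := unfold d; eapply spec_ext; [synth | intro v; unfold a; cbn [map nth seq]].

Definition p_S := PComp PSucc [PProj 0].
Lemma s_S : spec p_S (fun v => S (a 0 v)).
Proof. intro v. econstructor. repeat constructor. constructor. Qed.
#[export] Hint Resolve s_S : spec.

Definition p_add := wrap 2 (PPrec (PProj 0) (PComp p_S [PProj 1])).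
Lemma s_add : spec p_add (fun v => a 0 v + a 1 v).
Proof. eapply spec_ext. apply spec_prec; synth. intro v. cbn [map seq nth].
  unfold precf. induction (a 0 v); simpl; auto. Qed.
#[export] Hint Resolve s_add : spec.
Definition p_mul := wrap 2 (PPrec PZero (PComp p_add [PProj 1; PProj 2])).
Lemma s_mul : spec p_mul (fun v => a 0 v * a 1 v).
Proof. eapply spec_ext. apply spec_prec; synth. intro v. cbn [map seq nth].
  unfold precf. induction (a 0 v); simpl; auto. rewrite IHn. unfold a; simpl. lia. Qed.
#[export] Hint Resolve s_mul : spec.

Definition p_pred := wrap 1 (PPrec PZero (PProj 0)).
Lemma s_pred : spec p_pred (fun v => pred (a 0 v)).
Proof. eapply spec_ext. apply spec_prec; synth. intro v. cbn [map seq nth].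
  unfold precf. destruct (a 0 v); simpl; auto. Qed.
#[export] Hint Resolve s_pred : spec.

Definition p_sub := PComp (wrap 2 (PPrec (PProj 0) (PComp p_pred [PProj 1]))) [PProj 1; PProj 0].
Lemma s_sub : spec p_sub (fun v => a 0 v - a 1 v).
Proof. eapply spec_ext. eapply spec_C. apply spec_prec; synth. synths.
  intro v. unfold a; cbn [map seq nth]. unfold precf.
  simpl. induction (nth 1 v 0); simpl. lia. rewrite IHn. lia. Qed.
#[export] Hint Resolve s_sub : spec.

Definition sg (n : nat) : nat := match n with 0 => 0 | S _ => 1 end.
Definition nsg (n : nat) : nat := match n with 0 => 1 | S _ => 0 end.
Definition p_one := PComp p_S [PZero].
Lemma s_one : spec p_one (fun _ => 1).
Proof. mk p_one. reflexivity. Qed.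
#[export] Hint Resolve s_one : spec.

Definition p_sg := wrap 1 (PPrec PZero p_one).
Lemma s_sg : spec p_sg (fun v => sg (a 0 v)).
Proof. eapply spec_ext. apply spec_prec; synth. intro v. cbn [map seq nth].
  unfold precf. destruct (a 0 v); simpl; auto. Qed.
#[export] Hint Resolve s_sg : spec.

Definition p_nsg := wrap 1 (PPrec p_one PZero).
Lemma s_nsg : spec p_nsg (fun v => nsg (a 0 v)).
Proof. eapply spec_ext. apply spec_prec; synth. intro v. cbn [map seq nth].
  unfold precf. destruct (a 0 v); simpl; auto. Qed.
#[export] Hint Resolve s_nsg : spec.

Definition b2n (b : bool) : nat := if b then 1 else 0.

Definition p_eq := PComp p_nsg [PComp p_add [p_sub; PComp p_sub [PProj 1; PProj 0]]].
Lemma s_eq : spec p_eq (fun v => b2n (a 0 v =? a 1 v)).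
Proof. mk p_eq. destruct (Nat.eqb_spec (nth 0 v 0) (nth 1 v 0)).
  rewrite e. replace (_ - _ + _) with 0 by lia. reflexivity.
  destruct (nth 0 v 0 - nth 1 v 0 + (nth 1 v 0 - nth 0 v 0)) eqn:E. lia. reflexivity. Qed.
#[export] Hint Resolve s_eq : spec.

Definition p_lt := PComp p_sg [PComp p_sub [PProj 1; PProj 0]].
Lemma s_lt : spec p_lt (fun v => b2n (a 0 v <? a 1 v)).
Proof. mk p_lt. destruct (Nat.ltb_spec (nth 0 v 0) (nth 1 v 0)).
  destruct (nth 1 v 0 - nth 0 v 0) eqn:E. lia. reflexivity.
  replace (_ - _) with 0 by lia. reflexivity. Qed.
#[export] Hint Resolve s_lt : spec.

Definition p_le := PComp p_nsg [p_sub].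
Lemma s_le : spec p_le (fun v => b2n (a 0 v <=? a 1 v)).
Proof. mk p_le. destruct (Nat.leb_spec (nth 0 v 0) (nth 1 v 0)).
  replace (_ - _) with 0 by lia. reflexivity.
  destruct (nth 0 v 0 - nth 1 v 0) eqn:E. lia. reflexivity. Qed.
#[export] Hint Resolve s_le : spec.

Definition band x y := sg (x * y).
Definition bor x y := sg (x + y).
Definition p_and := PComp p_sg [p_mul].
Lemma s_and : spec p_and (fun v => band (a 0 v) (a 1 v)).
Proof. mk p_and. reflexivity. Qed.
#[export] Hint Resolve s_and : spec.
Definition p_or := PComp p_sg [p_add].
Lemma s_or : spec p_or (fun v => bor (a 0 v) (a 1 v)).
Proof. mk p_or. reflexivity. Qed.
#[export] Hint Resolve s_or : spec.

Definition ite (c x y : nat) := match c with 0 => y | S _ => x end.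
Definition p_ite := PComp p_add [PComp p_mul [PComp p_sg [PProj 0]; PProj 1];
                                 PComp p_mul [PComp p_nsg [PProj 0]; PProj 2]].
Lemma s_ite : spec p_ite (fun v => ite (a 0 v) (a 1 v) (a 2 v)).
Proof. mk p_ite. destruct (nth 0 v 0); simpl; lia. Qed.
#[export] Hint Resolve s_ite : spec.

Lemma band_nz x y : band x y <> 0 <-> x <> 0 /\ y <> 0.
Proof. unfold band. destruct (x * y) eqn:E; simpl; split; intros; try lia.
  all: try (apply Nat.mul_eq_0 in E; tauto).
  all: split; intros ->; [rewrite Nat.mul_0_l in E | rewrite Nat.mul_0_r in E]; discriminate. Qed.
Lemma bor_nz x y : bor x y <> 0 <-> x <> 0 \/ y <> 0.
Proof. unfold bor. destruct x, y; simpl; split; intros; try lia; discriminate. Qed.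
Lemma sg_nz x : sg x <> 0 <-> x <> 0.
Proof. destruct x; simpl; split; intros; try lia; discriminate. Qed.
Lemma nsg_nz x : nsg x <> 0 <-> x = 0.
Proof. destruct x; simpl; split; intros; try lia; discriminate. Qed.
Lemma b2n_nz b : b2n b <> 0 <-> b = true.
Proof. destruct b; simpl; split; intros; try lia; discriminate. Qed.
Fixpoint tri (n : nat) : nat := match n with 0 => 0 | S m => tri m + S m end.
Lemma tri2 n : 2 * tri n = n * (n + 1).
Proof. induction n; simpl tri; [reflexivity|]. rewrite Nat.mul_add_distr_l, IHn. nia. Qed.
Lemma npair_tri x y : npair x y = tri (x + y) + y.
Proof. unfold npair. f_equal. rewrite <- tri2. rewrite Nat.mul_comm. apply Nat.div_mul. lia. Qed.
Lemma tri_mono n m : n <= m -> tri n <= tri m.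
Proof. induction 1; simpl; lia. Qed.

Fixpoint unp (z : nat) : nat * nat :=
  match z with 0 => (0, 0)
  | S z' => let (x, y) := unp z' in match x with 0 => (S y, 0) | S x' => (x', S y) end end.
Definition cfst z := fst (unp z).
Definition csnd z := snd (unp z).
Lemma pair_fs z : npair (cfst z) (csnd z) = z.
Proof. unfold cfst, csnd. induction z. reflexivity. simpl. destruct (unp z) as [x y]; simpl in *.
  rewrite npair_tri in *. destruct x; simpl in *.
  - replace (y + 0) with y by lia. lia.
  - replace (x + S y) with (S (x + y)) by lia. simpl. lia. Qed.
Lemma npair_inj x y x' y' : npair x y = npair x' y' -> x = x' /\ y = y'.
Proof. rewrite !npair_tri. intro H.
  assert (x + y = x' + y').
  { destruct (lt_eq_lt_dec (x+y) (x'+y')) as [[Hl|He]|Hl]; auto.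
    - pose proof (tri_mono (S (x+y)) (x'+y') Hl). simpl in H0. lia.
    - pose proof (tri_mono (S (x'+y')) (x+y) Hl). simpl in H0. lia. }
  rewrite H0 in H. split; lia. Qed.
Lemma fst_pair x y : cfst (npair x y) = x.
Proof. destruct (npair_inj _ _ _ _ (pair_fs (npair x y))). auto. Qed.
Lemma snd_pair x y : csnd (npair x y) = y.
Proof. destruct (npair_inj _ _ _ _ (pair_fs (npair x y))). auto. Qed.
Lemma csnd_le z : csnd z <= z.
Proof. rewrite <- (pair_fs z) at 2. rewrite npair_tri. lia. Qed.
Lemma cfst_le z : cfst z <= z.
Proof. rewrite <- (pair_fs z) at 2. rewrite npair_tri. pose proof (tri_mono (cfst z) (cfst z + csnd z)).
  assert (cfst z <= tri (cfst z)) by (destruct (cfst z); simpl; lia). lia. Qed.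

Definition p_tri := wrap 1 (PPrec PZero (PComp p_add [PProj 1; PComp p_S [PProj 0]])).
Lemma s_tri : spec p_tri (fun v => tri (a 0 v)).
Proof. eapply spec_ext. apply spec_prec; synth. intro v. unfold a; cbn [map seq nth].
  unfold precf. simpl. induction (nth 0 v 0); simpl; auto. Qed.
#[export] Hint Resolve s_tri : spec.

Definition p_pair := PComp p_add [PComp p_tri [p_add]; PProj 1].
Lemma s_pair : spec p_pair (fun v => npair (a 0 v) (a 1 v)).
Proof. mk p_pair. rewrite npair_tri. reflexivity. Qed.
#[export] Hint Resolve s_pair : spec.

Definition diag z := cfst z + csnd z.
Lemma diag_spec z : tri (diag z) <= z < tri (S (diag z)).
Proof. unfold diag. pose proof (pair_fs z) as H. rewrite npair_tri in H. simpl. lia. Qed.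

Definition p_diag := PMu (PComp p_nsg [PComp p_lt [PProj 1; PComp p_tri [PComp p_S [PProj 0]]]]).
Lemma s_diag : spec p_diag (fun v => diag (a 0 v)).
Proof. unfold p_diag. eapply spec_mu. synth. intro v. unfold a; cbn [map nth].
  pose proof (diag_spec (nth 0 v 0)). split.
  - destruct (Nat.ltb_spec (nth 0 v 0) (tri (S (diag (nth 0 v 0))))). reflexivity. lia.
  - intros m Hm. destruct (Nat.ltb_spec (nth 0 v 0) (tri (S m))). 2: simpl; discriminate.
    pose proof (tri_mono (S m) (diag (nth 0 v 0)) Hm). lia. Qed.
#[export] Hint Resolve s_diag : spec.

Definition p_snd := PComp p_sub [PProj 0; PComp p_tri [p_diag]].
Lemma s_snd : spec p_snd (fun v => csnd (a 0 v)).
Proof. mk p_snd. set (z := nth 0 v 0). unfold diag. pose proof (pair_fs z) as H. rewrite npair_tri in H. lia. Qed.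
#[export] Hint Resolve s_snd : spec.

Definition p_fst := PComp p_sub [p_diag; p_snd].
Lemma s_fst : spec p_fst (fun v => cfst (a 0 v)).
Proof. mk p_fst. unfold diag. lia. Qed.
#[export] Hint Resolve s_fst : spec.
Definition ccons x l := S (npair x l).
Definition chd z := cfst (pred z).
Definition ctl z := csnd (pred z).
Fixpoint lcode (l : list nat) : nat := match l with [] => 0 | x :: l' => ccons x (lcode l') end.
Definition ctlN n z := Nat.iter n ctl z.
Definition cnth i z := chd (ctlN i z).

Lemma chd_cons x l : chd (ccons x l) = x.
Proof. unfold chd, ccons. simpl. apply fst_pair. Qed.
Lemma ctl_cons x l : ctl (ccons x l) = l.
Proof. unfold ctl, ccons. simpl. apply snd_pair. Qed.
Lemma ctl_0 : ctl 0 = 0. Proof. reflexivity. Qed.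
Lemma chd_0 : chd 0 = 0. Proof. reflexivity. Qed.
Lemma ctlN_S n z : ctlN (S n) z = ctlN n (ctl z).
Proof. unfold ctlN. apply Nat.iter_succ_r. Qed.
Lemma ctlN_0 n : ctlN n 0 = 0.
Proof. induction n; simpl; auto. unfold ctlN in *; simpl; rewrite IHn; reflexivity. Qed.
Lemma cnth_lcode l i : cnth i (lcode l) = nth i l 0.
Proof. revert i; induction l; intro i; unfold cnth in *.
  - rewrite ctlN_0. destruct i; reflexivity.
  - destruct i; simpl lcode. unfold ctlN; simpl. apply chd_cons.
    rewrite ctlN_S, ctl_cons. apply IHl. Qed.
Lemma ctlN_lcode l m : ctlN m (lcode l) = lcode (skipn m l).
Proof. revert m; induction l; intro m. rewrite ctlN_0. destruct m; reflexivity.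
  destruct m. reflexivity. rewrite ctlN_S. simpl lcode. rewrite ctl_cons. apply IHl. Qed.
Lemma ccons_eq x l x' l' : ccons x l = ccons x' l' -> x = x' /\ l = l'.
Proof. unfold ccons. intro H. injection H. apply npair_inj. Qed.
Lemma lcode_inj l l' : lcode l = lcode l' -> l = l'.
Proof. revert l'; induction l; destruct l'; simpl; intro H; try discriminate; auto.
  apply ccons_eq in H. destruct H. f_equal; auto. Qed.

Fixpoint ldecF (f z : nat) : list nat :=
  match f with 0 => [] | S f' => match z with 0 => [] | S w => cfst w :: ldecF f' (csnd w) end end.
Definition ldec z := ldecF z z.
Lemma ldecF_ok f z : z <= f -> lcode (ldecF f z) = z.
Proof. revert z; induction f; intros z Hz. destruct z; [reflexivity|lia].
  destruct z. reflexivity. simpl. unfold ccons. rewrite IHf. f_equal. apply pair_fs.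
  pose proof (csnd_le z). lia. Qed.
Lemma ldec_ok z : lcode (ldec z) = z.
Proof. apply ldecF_ok. lia. Qed.
Definition clen z := length (ldec z).
Lemma clen_lcode l : clen (lcode l) = length l.
Proof. unfold clen. f_equal. apply lcode_inj. apply ldec_ok. Qed.

Definition p_hd := PComp p_fst [p_pred].
Lemma s_hd : spec p_hd (fun v => chd (a 0 v)).
Proof. mk p_hd. reflexivity. Qed.
#[export] Hint Resolve s_hd : spec.
Definition p_tl := PComp p_snd [p_pred].
Lemma s_tl : spec p_tl (fun v => ctl (a 0 v)).
Proof. mk p_tl. reflexivity. Qed.
#[export] Hint Resolve s_tl : spec.
Definition p_cons := PComp p_S [p_pair].
Lemma s_cons : spec p_cons (fun v => ccons (a 0 v) (a 1 v)).
Proof. mk p_cons. reflexivity. Qed.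
#[export] Hint Resolve s_cons : spec.
Definition p_tlN := wrap 2 (PPrec (PProj 0) (PComp p_tl [PProj 1])).
Lemma s_tlN : spec p_tlN (fun v => ctlN (a 0 v) (a 1 v)).
Proof. eapply spec_ext. apply spec_prec; synth. intro v. unfold a; cbn [map seq nth].
  unfold precf. simpl. induction (nth 0 v 0); simpl; auto. Qed.
#[export] Hint Resolve s_tlN : spec.
Definition p_nth := PComp p_hd [p_tlN].
Lemma s_nth : spec p_nth (fun v => cnth (a 0 v) (a 1 v)).
Proof. mk p_nth. reflexivity. Qed.
#[export] Hint Resolve s_nth : spec.
Definition p_len := PMu (PComp p_sg [PComp p_tlN [PProj 0; PProj 1]]).
Lemma s_len : spec p_len (fun v => clen (a 0 v)).
Proof. unfold p_len. eapply spec_mu. synth. intro v. unfold a; cbn [map nth].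
  set (z := nth 0 v 0). rewrite <- (ldec_ok z). rewrite clen_lcode. split.
  - rewrite ctlN_lcode, skipn_all. reflexivity.
  - intros m Hm. rewrite ctlN_lcode. destruct (skipn m (ldec z)) eqn:E. 
    apply (f_equal (@length nat)) in E. rewrite length_skipn in E. simpl in E. lia.
    simpl. discriminate. Qed.
#[export] Hint Resolve s_len : spec.
Definition bexN (n : nat) (h : nat -> nat) : nat := nat_rect (fun _ => nat) 0 (fun m r => bor r (h m)) n.
Definition bfaN (n : nat) (h : nat -> nat) : nat := nat_rect (fun _ => nat) 1 (fun m r => band r (h m)) n.

Lemma bexN_nz n h : bexN n h <> 0 <-> exists m, m < n /\ h m <> 0.
Proof. induction n; simpl. split; [lia|]. intros [m [Hm _]]; lia.
  fold (bexN n h). rewrite bor_nz, IHn. split.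
  - intros [[m [Hm Hh]]|Hh]; exists m || exists n; split; auto; lia.
  - intros [m [Hm Hh]]. destruct (Nat.eq_dec m n). subst; auto. left; exists m; split; auto; lia. Qed.
Lemma bfaN_nz n h : bfaN n h <> 0 <-> forall m, m < n -> h m <> 0.
Proof. induction n; simpl. split; intros; [lia|discriminate].
  fold (bfaN n h). rewrite band_nz, IHn. split.
  - intros [H1 H2] m Hm. destruct (Nat.eq_dec m n). subst; auto. apply H1; lia.
  - intros H; split; auto. Qed.

Lemma map_nth_seq (w : list nat) : map (fun j => nth j w 0) (seq 0 (length w)) = w.
Proof. induction w; simpl; auto. f_equal. rewrite <- seq_shift, map_map. simpl. auto. Qed.

Definition qargs k := PProj 0 :: map (fun j => PProj (2 + j)) (seq 0 k).
Lemma qargs_spec k : Forall2 spec (qargs k) (a 0 :: map (fun j => a (2 + j)) (seq 0 k)).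
Proof. unfold qargs. constructor. apply spec_P. induction (seq 0 k); simpl; constructor; auto. apply spec_P. Qed.

Lemma qargs_eval k n r v :
  map (fun G => G (n :: r :: map (fun j => a j v) (seq 1 k))) (a 0 :: map (fun j => a (2 + j)) (seq 0 k))
  = n :: map (fun j => a j v) (seq 1 k).
Proof. simpl. f_equal. rewrite map_map. unfold a at 1. simpl.
  set (w := map (fun j => a j v) (seq 1 k)).
  replace k with (length w) at 1 by (unfold w; rewrite length_map, length_seq; auto).
  apply map_nth_seq. Qed.

Lemma precf_bex F G h x w : F w = 0 -> (forall n r, G (n :: r :: w) = bor r (h n)) -> precf F G x w = bexN x h.
Proof. intros H0 H. unfold precf, bexN. induction x; simpl. auto. rewrite H, IHx. reflexivity. Qed.
Lemma precf_bfa F G h x w : F w = 1 -> (forall n r, G (n :: r :: w) = band r (h n)) -> precf F G x w = bfaN x h.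
Proof. intros H0 H. unfold precf, bfaN. induction x; simpl. auto. rewrite H, IHx. reflexivity. Qed.

Lemma qargs_eval2 k n r v :
  map (fun G => G (n :: r :: map (fun j => a j v) (seq 1 k))) (map (fun j => a (2 + j)) (seq 0 k))
  = map (fun j => a j v) (seq 1 k).
Proof. pose proof (qargs_eval k n r v). simpl in H. injection H. auto. Qed.

Definition pbex k P := wrap (S k) (PPrec PZero (PComp p_or [PProj 1; PComp P (qargs k)])).
Lemma s_bex k P PF : spec P PF ->
  spec (pbex k P) (fun v => bexN (a 0 v) (fun m => PF (m :: map (fun j => a j v) (seq 1 k)))).
Proof. intro HP. unfold pbex. eapply spec_ext. apply spec_prec. apply spec_Z.
  eapply spec_C. apply s_or. constructor. apply spec_P. constructor. eapply spec_C. exact HP.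
  apply qargs_spec. constructor.
  intro v. apply precf_bex. reflexivity. intros n r. cbn [map]. rewrite qargs_eval2. reflexivity. Qed.

Definition pbfa k P := wrap (S k) (PPrec p_one (PComp p_and [PProj 1; PComp P (qargs k)])).
Lemma s_bfa k P PF : spec P PF ->
  spec (pbfa k P) (fun v => bfaN (a 0 v) (fun m => PF (m :: map (fun j => a j v) (seq 1 k)))).
Proof. intro HP. unfold pbfa. eapply spec_ext. apply spec_prec. apply s_one.
  eapply spec_C. apply s_and. constructor. apply spec_P. constructor. eapply spec_C. exact HP.
  apply qargs_spec. constructor.
  intro v. apply precf_bfa. reflexivity. intros n r. cbn [map]. rewrite qargs_eval2. reflexivity. Qed.
#[export] Hint Resolve s_bex s_bfa : spec.
Fixpoint code (e : prf) : nat :=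
  match e with
  | PZero => npair 0 0
  | PSucc => npair 1 0
  | PProj i => npair 2 i
  | PComp f gs => npair 3 (npair (code f) (lcode (map code gs)))
  | PPrec f g => npair 4 (npair (code f) (code g))
  | PMu f => npair 5 (code f)
  end.
Lemma code_PZero : code PZero = 0. Proof. reflexivity. Qed.
Definition jc c v y := npair c (npair v y).

Fixpoint pconst n := match n with 0 => PZero | S m => PComp p_S [pconst m] end.
Lemma s_const n : spec (pconst n) (fun _ => n).
Proof. induction n. apply spec_Z. simpl. eapply spec_ext. eapply spec_C. apply s_S. constructor. exact IHn. constructor.
  intro v. reflexivity. Qed.
#[export] Hint Resolve s_const : spec.
Definition p_bmemb := PComp p_and [PComp p_lt [PProj 2; PProj 0];
   PComp p_eq [PComp p_fst [PComp p_nth [PProj 0; PProj 1]]; PProj 3]].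
Lemma s_bmemb : spec p_bmemb (fun v => band (b2n (a 2 v <? a 0 v)) (b2n (cfst (cnth (a 0 v) (a 1 v)) =? a 3 v))).
Proof. mk p_bmemb. reflexivity. Qed.
#[export] Hint Resolve s_bmemb : spec.

Definition membF L i x := bexN (clen L) (fun k => band (b2n (i <? k)) (b2n (cfst (cnth k L) =? x))).
Definition p_memb := PComp (pbex 3 p_bmemb) [PComp p_len [PProj 0]; PProj 0; PProj 1; PProj 2].
Lemma s_memb : spec p_memb (fun v => membF (a 0 v) (a 1 v) (a 2 v)).
Proof. mk p_memb. reflexivity. Qed.
#[export] Hint Resolve s_memb : spec.

Notation jcP x y z := (PComp p_pair [x; PComp p_pair [y; z]]).
Notation membP x := (PComp p_memb [PProj 0; PProj 1; x]).
Notation arP := (PComp p_snd [PProj 2]).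

Definition F6 := nat -> nat -> nat -> nat -> nat -> nat -> nat.
Definition sp6 (e : prf) (F : F6) := spec e (fun v => F (a 0 v) (a 1 v) (a 2 v) (a 3 v) (a 4 v) (a 5 v)).

Definition p_B0 := PComp p_eq [PProj 4; PZero].
Definition B0F : F6 := fun L i c v y h => b2n (y =? 0).
Lemma s_B0 : spec p_B0 (fun v => B0F (a 0 v) (a 1 v) (a 2 v) (a 3 v) (a 4 v) (a 5 v)).
Proof. mk p_B0. reflexivity. Qed.
#[export] Hint Resolve s_B0 : spec.
Definition p_B1 := PComp p_and [PComp p_sg [PProj 3]; PComp p_eq [PProj 4; PComp p_S [PComp p_hd [PProj 3]]]].
Definition B1F : F6 := fun L i c v y h => band (sg v) (b2n (y =? S (chd v))).
Lemma s_B1 : spec p_B1 (fun v => B1F (a 0 v) (a 1 v) (a 2 v) (a 3 v) (a 4 v) (a 5 v)).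
Proof. mk p_B1. reflexivity. Qed.
#[export] Hint Resolve s_B1 : spec.
Definition p_B2 := PComp p_eq [PProj 4; PComp p_nth [arP; PProj 3]].
Definition B2F : F6 := fun L i c v y h => b2n (y =? cnth (csnd c) v).
Lemma s_B2 : spec p_B2 (fun v => B2F (a 0 v) (a 1 v) (a 2 v) (a 3 v) (a 4 v) (a 5 v)).
Proof. mk p_B2. reflexivity. Qed.
#[export] Hint Resolve s_B2 : spec.

Definition p_body3 := PComp p_memb [PProj 1; PProj 2;
   jcP (PComp p_nth [PProj 0; PProj 3]) (PProj 4) (PComp p_nth [PProj 0; PProj 5])].
Lemma s_body3 : spec p_body3 (fun v => membF (a 1 v) (a 2 v) (jc (cnth (a 0 v) (a 3 v)) (a 4 v) (cnth (a 0 v) (a 5 v)))).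
Proof. mk p_body3. reflexivity. Qed.
#[export] Hint Resolve s_body3 : spec.
Notation gsP := (PComp p_snd [arP]).
Notation f3P := (PComp p_fst [arP]).
Definition p_B3 := PComp p_and [PComp p_eq [PComp p_len [PProj 5]; PComp p_len [gsP]];
   PComp p_and [membP (jcP f3P (PProj 5) (PProj 4));
                PComp (pbfa 5 p_body3) [PComp p_len [gsP]; PProj 0; PProj 1; gsP; PProj 3; PProj 5]]].
Definition B3F : F6 := fun L i c v y h =>
  band (b2n (clen h =? clen (csnd (csnd c))))
   (band (membF L i (jc (cfst (csnd c)) h y))
     (bfaN (clen (csnd (csnd c))) (fun m => membF L i (jc (cnth m (csnd (csnd c))) v (cnth m h))))).
Lemma s_B3 : spec p_B3 (fun v => B3F (a 0 v) (a 1 v) (a 2 v) (a 3 v) (a 4 v) (a 5 v)).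
Proof. mk p_B3. reflexivity. Qed.
#[export] Hint Resolve s_B3 : spec.

Notation hdvP := (PComp p_hd [PProj 3]).
Notation tlvP := (PComp p_tl [PProj 3]).
Notation nP := (PComp p_pred [hdvP]).
Definition p_B4 := PComp p_and [PComp p_sg [PProj 3]; PComp p_ite [hdvP;
   PComp p_and [membP (jcP (PProj 2) (PComp p_cons [nP; tlvP]) (PProj 5));
                membP (jcP (PComp p_snd [arP]) (PComp p_cons [nP; PComp p_cons [PProj 5; tlvP]]) (PProj 4))];
   membP (jcP f3P tlvP (PProj 4))]].
Definition B4F : F6 := fun L i c v y h =>
  band (sg v) (ite (chd v)
    (band (membF L i (jc c (ccons (pred (chd v)) (ctl v)) h))
          (membF L i (jc (csnd (csnd c)) (ccons (pred (chd v)) (ccons h (ctl v))) y)))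
    (membF L i (jc (cfst (csnd c)) (ctl v) y))).
Lemma s_B4 : spec p_B4 (fun v => B4F (a 0 v) (a 1 v) (a 2 v) (a 3 v) (a 4 v) (a 5 v)).
Proof. mk p_B4. reflexivity. Qed.
#[export] Hint Resolve s_B4 : spec.

Definition p_body5 := PComp p_and [PComp p_sg [PComp p_nth [PProj 0; PProj 5]];
   PComp p_memb [PProj 1; PProj 2; jcP (PProj 3) (PComp p_cons [PProj 0; PProj 4]) (PComp p_nth [PProj 0; PProj 5])]].
Lemma s_body5 : spec p_body5 (fun v => band (sg (cnth (a 0 v) (a 5 v)))
   (membF (a 1 v) (a 2 v) (jc (a 3 v) (ccons (a 0 v) (a 4 v)) (cnth (a 0 v) (a 5 v))))).
Proof. mk p_body5. reflexivity. Qed.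
#[export] Hint Resolve s_body5 : spec.
Definition p_B5 := PComp p_and [membP (jcP arP (PComp p_cons [PProj 4; PProj 3]) PZero);
   PComp (pbfa 5 p_body5) [PProj 4; PProj 0; PProj 1; arP; PProj 3; PProj 5]].
Definition B5F : F6 := fun L i c v y h =>
  band (membF L i (jc (csnd c) (ccons y v) 0))
   (bfaN y (fun m => band (sg (cnth m h)) (membF L i (jc (csnd c) (ccons m v) (cnth m h))))).
Lemma s_B5 : spec p_B5 (fun v => B5F (a 0 v) (a 1 v) (a 2 v) (a 3 v) (a 4 v) (a 5 v)).
Proof. mk p_B5. reflexivity. Qed.
#[export] Hint Resolve s_B5 : spec.
Notation tsel j B := (PComp p_mul [PComp p_eq [PComp p_fst [PProj 2]; pconst j]; B]).
Definition p_justp := PComp p_sg [PComp p_add [tsel 0 p_B0; PComp p_add [tsel 1 p_B1;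
  PComp p_add [tsel 2 p_B2; PComp p_add [tsel 3 p_B3; PComp p_add [tsel 4 p_B4; tsel 5 p_B5]]]]]].
Definition justF' : F6 := fun L i c v y h =>
  sg (b2n (cfst c =? 0) * B0F L i c v y h + (b2n (cfst c =? 1) * B1F L i c v y h +
     (b2n (cfst c =? 2) * B2F L i c v y h + (b2n (cfst c =? 3) * B3F L i c v y h +
     (b2n (cfst c =? 4) * B4F L i c v y h + b2n (cfst c =? 5) * B5F L i c v y h))))).
Lemma s_justp : spec p_justp (fun v => justF' (a 0 v) (a 1 v) (a 2 v) (a 3 v) (a 4 v) (a 5 v)).
Proof. mk p_justp. reflexivity. Qed.
#[export] Hint Resolve s_justp : spec.

Definition justF L i := let E := cnth i L in
  justF' L i (cfst (cfst E)) (cfst (csnd (cfst E))) (csnd (csnd (cfst E))) (csnd E).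
Notation EP := (PComp p_nth [PProj 1; PProj 0]).
Definition p_just := PComp p_justp [PProj 0; PProj 1; PComp p_fst [PComp p_fst [EP]];
  PComp p_fst [PComp p_snd [PComp p_fst [EP]]]; PComp p_snd [PComp p_snd [PComp p_fst [EP]]];
  PComp p_snd [EP]].
Lemma s_just : spec p_just (fun v => justF (a 0 v) (a 1 v)).
Proof. mk p_just. reflexivity. Qed.
#[export] Hint Resolve s_just : spec.

Definition validF L := bfaN (clen L) (fun i => justF L i).
Definition p_bv := PComp p_just [PProj 1; PProj 0].
Lemma s_bv : spec p_bv (fun v => justF (a 1 v) (a 0 v)).
Proof. mk p_bv. reflexivity. Qed.
#[export] Hint Resolve s_bv : spec.
Definition p_valid := PComp (pbfa 1 p_bv) [PComp p_len [PProj 0]; PProj 0].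
Lemma s_valid : spec p_valid (fun v => validF (a 0 v)).
Proof. mk p_valid. reflexivity. Qed.
#[export] Hint Resolve s_valid : spec.
Definition justP (c v y h : nat) (M : nat -> Prop) : Prop :=
  match cfst c with
  | 0 => y = 0
  | 1 => v <> 0 /\ y = S (chd v)
  | 2 => y = cnth (csnd c) v
  | 3 => clen h = clen (csnd (csnd c)) /\ M (jc (cfst (csnd c)) h y) /\
         forall m, m < clen (csnd (csnd c)) -> M (jc (cnth m (csnd (csnd c))) v (cnth m h))
  | 4 => v <> 0 /\ (chd v = 0 -> M (jc (cfst (csnd c)) (ctl v) y)) /\
         (chd v <> 0 -> M (jc c (ccons (pred (chd v)) (ctl v)) h) /\
                        M (jc (csnd (csnd c)) (ccons (pred (chd v)) (ccons h (ctl v))) y))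
  | 5 => M (jc (csnd c) (ccons y v) 0) /\
         forall m, m < y -> cnth m h <> 0 /\ M (jc (csnd c) (ccons m v) (cnth m h))
  | _ => False
  end.

Lemma justP_mono c v y h (M M' : nat -> Prop) : (forall x, M x -> M' x) -> justP c v y h M -> justP c v y h M'.
Proof. intros HM. unfold justP. destruct (cfst c) as [|[|[|[|[|[|t]]]]]]; auto.
  - intros [H1 [H2 H3]]; repeat split; auto.
  - intros [H1 [H2 H3]]; repeat split; auto; intros; apply HM; apply H3; auto.
  - intros [H1 H2]; split; auto. intros m Hm; destruct (H2 m Hm); split; auto. Qed.

Lemma eqb_nz x y : b2n (x =? y) <> 0 <-> x = y.
Proof. rewrite b2n_nz. apply Nat.eqb_eq. Qed.

Lemma justF'_iff L i c v y h :
  justF' L i c v y h <> 0 <-> justP c v y h (fun x => membF L i x <> 0).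
Proof. unfold justF', justP.
  destruct (cfst c) as [|[|[|[|[|[|t]]]]]]; cbn [Nat.eqb b2n];
  rewrite ?Nat.mul_1_l, ?Nat.mul_0_l, ?Nat.add_0_r, ?Nat.add_0_l, ?sg_nz.
  - apply eqb_nz.
  - unfold B1F. rewrite band_nz, sg_nz, eqb_nz. tauto.
  - apply eqb_nz.
  - unfold B3F. rewrite !band_nz, eqb_nz, bfaN_nz. tauto.
  - unfold B4F. rewrite band_nz, sg_nz. destruct (chd v) eqn:E; simpl ite.
    + split; intros [H1 H2]; repeat split; auto; intros; lia.
    + rewrite band_nz. split; intros [H1 H2]; repeat split; auto; try lia; apply H2; lia.
  - unfold B5F. rewrite band_nz, bfaN_nz. setoid_rewrite band_nz. setoid_rewrite sg_nz. tauto.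
  - split; [lia|tauto].
Qed.
Lemma membF_nz L i x : membF L i x <> 0 <-> exists k, k < clen L /\ i < k /\ cfst (cnth k L) = x.
Proof. unfold membF. rewrite bexN_nz. setoid_rewrite band_nz. setoid_rewrite b2n_nz.
  setoid_rewrite Nat.ltb_lt. setoid_rewrite Nat.eqb_eq. split; intros [k H]; exists k; tauto. Qed.

Lemma jc_inj c v y c' v' y' : jc c v y = jc c' v' y' -> c = c' /\ v = v' /\ y = y'.
Proof. unfold jc. intro H. apply npair_inj in H. destruct H as [H1 H2]. apply npair_inj in H2. tauto. Qed.

Lemma evals_nth gs v ys : length ys = length gs ->
  (forall m, m < length gs -> eval (nth m gs PZero) v (nth m ys 0)) -> evals gs v ys.
Proof. revert ys; induction gs; intros ys Hl H; destruct ys; simpl in *; try discriminate.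
  constructor. constructor. apply (H 0); lia. apply IHgs. lia. intros m Hm. apply (H (S m)); lia. Qed.

Lemma lcode_nil vl : lcode vl <> 0 -> exists x w, vl = x :: w.
Proof. destruct vl. simpl; tauto. eauto. Qed.

Lemma sound L : validF L <> 0 -> forall k, k < clen L -> forall e vl y,
   cfst (cnth k L) = jc (code e) (lcode vl) y -> eval e vl y.
Proof.
  intros HV. unfold validF in HV. rewrite bfaN_nz in HV.
  enough (forall n k, clen L - k <= n -> k < clen L -> forall e vl y,
     cfst (cnth k L) = jc (code e) (lcode vl) y -> eval e vl y) by eauto.
  induction n; intros k Hn Hk e vl y HE. lia.
  pose proof (HV k Hk) as HJ. unfold justF in HJ. rewrite justF'_iff in HJ.
  rewrite HE in HJ. unfold jc in HJ. rewrite !fst_pair, !snd_pair in HJ. fold (jc (code e)) in HJ.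
  set (h := csnd (cnth k L)) in HJ. clearbody h.
  eapply justP_mono with (M' := fun x => forall e' vl' y', x = jc (code e') (lcode vl') y' -> eval e' vl' y') in HJ.
  2:{ intros x Hx e' vl' y' ->. apply membF_nz in Hx. destruct Hx as [k' [H1 [H2 H3]]].
      eapply IHn; [|exact H1|exact H3]. lia. }
  clear HV IHn HE.
  destruct e as [| |i|f gs|f g|f]; unfold justP in HJ; simpl code in HJ; repeat (rewrite fst_pair in HJ || rewrite snd_pair in HJ).
  - subst; constructor.
  - destruct HJ as [H1 H2]. destruct (lcode_nil _ H1) as [x [w ->]]. simpl lcode in H2.
    rewrite chd_cons in H2. subst. constructor.
  - rewrite cnth_lcode in HJ. subst. constructor.
  - destruct HJ as [H1 [H2 H3]]. rewrite <- (ldec_ok h) in *. set (ys := ldec h) in *.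
    rewrite !clen_lcode, length_map in *.
    econstructor; [|apply H2; reflexivity].
    apply evals_nth; auto. intros m Hm. apply (H3 m); auto.
    rewrite !cnth_lcode. rewrite <- code_PZero, map_nth. reflexivity.
  - destruct HJ as [H1 [H2 H3]]. destruct (lcode_nil _ H1) as [x [w ->]]. simpl lcode in *.
    rewrite chd_cons, ctl_cons in *. destruct x.
    + constructor. apply H2; auto.
    + destruct (H3 ltac:(lia)) as [H4 H5]. simpl pred in *. econstructor.
      apply H4. reflexivity. apply H5. reflexivity.
  - destruct HJ as [H1 H2]. constructor. apply H1; reflexivity.
    intros m Hm. destruct (H2 m Hm) as [H3 H4]. exists (cnth m h). split; auto.
Qed.
Section EvalInd.
Variable P : prf -> list nat -> nat -> Prop.
Hypothesis HZ : forall v, P PZero v 0.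
Hypothesis HS : forall x v, P PSucc (x :: v) (S x).
Hypothesis HP : forall i v, P (PProj i) v (nth i v 0).
Hypothesis HC : forall f gs v ys y, length ys = length gs ->
  (forall m, m < length gs -> P (nth m gs PZero) v (nth m ys 0)) -> P f ys y -> P (PComp f gs) v y.
Hypothesis HP0 : forall f g v y, P f v y -> P (PPrec f g) (0 :: v) y.
Hypothesis HPS : forall f g n v r y, P (PPrec f g) (n :: v) r -> P g (n :: r :: v) y -> P (PPrec f g) (S n :: v) y.
Hypothesis HM : forall f v n, P f (n :: v) 0 ->
  (forall m, m < n -> exists k, k <> 0 /\ P f (m :: v) k) -> P (PMu f) v n.

Fixpoint eval_ind2 e v y (H : eval e v y) {struct H} : P e v y
with evals_ind2 gs v ys (H : evals gs v ys) {struct H} :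
  length ys = length gs /\ forall m, m < length gs -> P (nth m gs PZero) v (nth m ys 0).
Proof.
- destruct H as [v|x v|i v|f gs v ys y Hs Hf|f g v y Hf|f g n v r y Hr Hg|f v n H0 Hall].
  + apply HZ.
  + apply HS.
  + apply HP.
  + destruct (evals_ind2 _ _ _ Hs) as [H1 H2]. apply (HC f gs v ys y); auto.
  + apply HP0; auto.
  + eapply HPS; eauto.
  + apply HM. apply eval_ind2; auto.
    intros m Hm. destruct (Hall m Hm) as [k [Hk Hev]]. exists k. split; auto.
- destruct H as [v|g gs v y ys Hg Hs].
  + split; auto. simpl; intros; lia.
  + destruct (evals_ind2 _ _ _ Hs) as [H1 H2]. split. simpl; auto.
    intros [|m] Hm; simpl. apply eval_ind2; auto. apply H2. simpl in Hm; lia.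
Qed.
End EvalInd.
Definition justE E M := justP (cfst (cfst E)) (cfst (csnd (cfst E))) (csnd (csnd (cfst E))) (csnd E) M.
Definition inL (Ls : list nat) x := exists k, k < length Ls /\ cfst (nth k Ls 0) = x.
Definition good Ls := forall i, i < length Ls -> justE (nth i Ls 0) (inL (skipn (S i) Ls)).

Lemma good_nil : good []. Proof. intros i H; simpl in H; lia. Qed.
Lemma good_cons x L : justE x (inL L) -> good L -> good (x :: L).
Proof. intros H1 H2 [|i] Hi; simpl; auto. apply H2. simpl in Hi; lia. Qed.
Lemma inL_app_l L1 L2 x : inL L1 x -> inL (L1 ++ L2) x.
Proof. intros [k [H1 H2]]. exists k. rewrite length_app, app_nth1; auto. split; auto; lia. Qed.
Lemma inL_app_r L1 L2 x : inL L2 x -> inL (L1 ++ L2) x.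
Proof. intros [k [H1 H2]]. exists (length L1 + k). rewrite length_app, app_nth2 by lia.
  replace (length L1 + k - length L1) with k by lia. split; auto; lia. Qed.
Lemma inL_cons z L x : inL L x -> inL (z :: L) x.
Proof. intros [k [H1 H2]]. exists (S k). simpl. split; auto; lia. Qed.
Lemma inL_hd z L : inL (z :: L) (cfst z).
Proof. exists 0. simpl. split; auto; lia. Qed.

Lemma good_app L1 L2 : good L1 -> good L2 -> good (L1 ++ L2).
Proof. intros H1 H2 i Hi. rewrite length_app in Hi. destruct (Nat.lt_ge_cases i (length L1)).
  - rewrite app_nth1 by auto. eapply justP_mono; [|apply H1; auto].
    intros x Hx. rewrite skipn_app. replace (S i - length L1) with 0 by lia. simpl. apply inL_app_l; auto.
  - rewrite app_nth2 by auto. eapply justP_mono; [|apply H2; lia].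
    intros x Hx. rewrite skipn_app. rewrite skipn_all2 by lia. rewrite app_nil_l.
    replace (S i - length L1) with (S (i - length L1)) by lia. auto. Qed.

Lemma combine_lists (X : nat -> nat) N : (forall m, m < N -> exists Ls, good Ls /\ inL Ls (X m)) ->
  exists Ls, good Ls /\ forall m, m < N -> inL Ls (X m).
Proof. induction N; intros H. exists []. split. apply good_nil. intros; lia.
  destruct IHN as [L1 [G1 I1]]. intros; apply H; lia.
  destruct (H N) as [L2 [G2 I2]]. lia. exists (L1 ++ L2). split. apply good_app; auto.
  intros m Hm. destruct (Nat.eq_dec m N). subst. apply inL_app_r; auto. apply inL_app_l. apply I1; lia. Qed.

Lemma choose_list (Q : nat -> nat -> Prop) N : (forall m, m < N -> exists k, Q m k) ->
  exists l, length l = N /\ forall m, m < N -> Q m (nth m l 0).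
Proof. induction N; intros H. exists []. split; auto. intros; lia.
  destruct IHN as [l [H1 H2]]. intros; apply H; lia.
  destruct (H N) as [k Hk]. lia. exists (l ++ [k]). split. rewrite length_app; simpl; lia.
  intros m Hm. destruct (Nat.eq_dec m N). subst. rewrite app_nth2 by lia. rewrite Nat.sub_diag. auto.
  rewrite app_nth1 by lia. apply H2; lia. Qed.

Definition Pc e v y := exists Ls, good Ls /\ exists h Ls', Ls = npair (jc (code e) (lcode v) y) h :: Ls'.

Lemma Pc_inL e v y : Pc e v y -> exists Ls, good Ls /\ inL Ls (jc (code e) (lcode v) y).
Proof. intros [Ls [G [h [Ls' ->]]]]. exists (npair (jc (code e) (lcode v) y) h :: Ls'). split; auto.
  pose proof (inL_hd (npair (jc (code e) (lcode v) y) h) Ls'). rewrite fst_pair in H. auto. Qed.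

Ltac jsimp := unfold justE, justP, jc; repeat (rewrite fst_pair || rewrite snd_pair); simpl code;
  repeat (rewrite fst_pair || rewrite snd_pair); fold jc.

Lemma complete e v y : eval e v y -> Pc e v y.
Proof.
  apply eval_ind2; clear e v y.
  - intros v. exists [npair (jc (code PZero) (lcode v) 0) 0]. split; eauto.
    apply good_cons; [|apply good_nil]. jsimp. reflexivity.
  - intros x v. exists [npair (jc (code PSucc) (lcode (x :: v)) (S x)) 0]. split; eauto.
    apply good_cons; [|apply good_nil]. jsimp. simpl lcode. rewrite chd_cons. split; auto. unfold ccons; lia.
  - intros i v. exists [npair (jc (code (PProj i)) (lcode v) (nth i v 0)) 0]. split; eauto.
    apply good_cons; [|apply good_nil]. jsimp. rewrite cnth_lcode. reflexivity.
  - intros f gs v ys y Hl Hgs Hf.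
    destruct (combine_lists (fun m => jc (code (nth m gs PZero)) (lcode v) (nth m ys 0)) (length gs)) as [L1 [G1 I1]].
    { intros m Hm. apply Pc_inL. auto. }
    destruct (Pc_inL _ _ _ Hf) as [L2 [G2 I2]].
    exists (npair (jc (code (PComp f gs)) (lcode v) y) (lcode ys) :: L2 ++ L1). split; eauto.
    apply good_cons; [|apply good_app; auto]. jsimp.
    rewrite !clen_lcode, length_map. split; auto. split. apply inL_app_l; auto.
    intros m Hm. apply inL_app_r. rewrite !cnth_lcode. rewrite <- code_PZero, map_nth. apply I1; auto.
  - intros f g v y Hf. destruct (Pc_inL _ _ _ Hf) as [L1 [G1 I1]].
    exists (npair (jc (code (PPrec f g)) (lcode (0 :: v)) y) 0 :: L1). split; eauto.
    apply good_cons; auto. jsimp. simpl lcode. rewrite chd_cons, ctl_cons.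
    split. unfold ccons; lia. split; auto. intros; lia.
  - intros f g n v r y Hr Hg. destruct (Pc_inL _ _ _ Hr) as [L1 [G1 I1]]. destruct (Pc_inL _ _ _ Hg) as [L2 [G2 I2]].
    exists (npair (jc (code (PPrec f g)) (lcode (S n :: v)) y) r :: L1 ++ L2). split; eauto.
    apply good_cons; [|apply good_app; auto]. jsimp. simpl lcode. rewrite chd_cons, ctl_cons.
    split. unfold ccons; lia. split. intros; lia. intros _. simpl pred. split.
    apply inL_app_l. exact I1. apply inL_app_r. exact I2.
  - intros f v n H0 Hall.
    destruct (choose_list (fun m k => k <> 0 /\ Pc f (m :: v) k) n Hall) as [hs [Hl Hhs]].
    destruct (combine_lists (fun m => jc (code f) (lcode (m :: v)) (nth m hs 0)) n) as [L1 [G1 I1]].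
    { intros m Hm. apply Pc_inL. apply Hhs; auto. }
    destruct (Pc_inL _ _ _ H0) as [L2 [G2 I2]].
    exists (npair (jc (code (PMu f)) (lcode v) n) (lcode hs) :: L2 ++ L1). split; eauto.
    apply good_cons; [|apply good_app; auto]. jsimp. split. apply inL_app_l. exact I2.
    intros m Hm. rewrite cnth_lcode. split. apply Hhs; auto. apply inL_app_r. apply I1; auto.
Qed.

Lemma good_valid Ls : good Ls -> validF (lcode Ls) <> 0.
Proof. intros G. unfold validF. rewrite bfaN_nz. intros i Hi. rewrite clen_lcode in Hi.
  unfold justF. rewrite justF'_iff. rewrite cnth_lcode. eapply justP_mono; [|apply G; auto].
  intros x [k [H1 H2]]. apply membF_nz. exists (S i + k). rewrite clen_lcode, cnth_lcode.
  rewrite length_skipn in H1. rewrite nth_skipn in H2. split. lia. split. lia. auto. Qed.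
Lemma inv_comp f gs v y : eval (PComp f gs) v y -> exists ys, evals gs v ys /\ eval f ys y.
Proof. intro H. inversion H; subst. eauto. Qed.
Lemma inv_cons g gs v ys : evals (g :: gs) v ys -> exists y ys', ys = y :: ys' /\ eval g v y /\ evals gs v ys'.
Proof. intro H. inversion H; subst. eauto. Qed.
Lemma inv_nil v ys : evals [] v ys -> ys = [].
Proof. intro H. inversion H; subst. auto. Qed.
Lemma inv_mu f v n : eval (PMu f) v n -> eval f (n :: v) 0 /\ forall m, m < n -> exists k, k <> 0 /\ eval f (m :: v) k.
Proof. intro H. inversion H; subst. auto. Qed.
Lemma inv_proj i v y : eval (PProj i) v y -> y = nth i v 0.
Proof. intro H. inversion H; subst. auto. Qed.

Definition enc n pc := 2 ^ n * (2 * pc + 3) - 2.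
Definition p_pow2 := wrap 1 (PPrec p_one (PComp p_add [PProj 1; PProj 1])).
Lemma s_pow2 : spec p_pow2 (fun v => 2 ^ a 0 v).
Proof. eapply spec_ext. apply spec_prec; synth. intro v. unfold a; cbn [map seq nth].
  unfold precf. simpl. induction (nth 0 v 0); simpl; auto. lia. Qed.
#[export] Hint Resolve s_pow2 : spec.
Definition p_enc := PComp p_sub [PComp p_mul [PComp p_pow2 [PProj 0];
   PComp p_add [PComp p_add [PProj 1; PProj 1]; pconst 3]]; pconst 2].
Lemma s_enc : spec p_enc (fun v => enc (a 0 v) (a 1 v)).
Proof. mk p_enc. unfold enc. f_equal. f_equal. lia. Qed.
#[export] Hint Resolve s_enc : spec.

Definition Jt t := cfst (chd t).
Definition vt t := cfst (csnd (Jt t)).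
Definition yt t := csnd (csnd (Jt t)).
Definition st t := csnd (chd (vt t)).
Notation JtP x := (PComp p_fst [PComp p_hd [x]]).
Notation vtP x := (PComp p_fst [PComp p_snd [JtP x]]).
Notation ytP x := (PComp p_snd [PComp p_snd [JtP x]]).
Notation stP x := (PComp p_snd [PComp p_hd [vtP x]]).

Definition okF t ne pc := band (validF t) (band (sg t) (band (b2n (cfst (Jt t) =? ne))
  (band (sg (vt t)) (band (b2n (cfst (chd (vt t)) =? pc)) (b2n (ctl (vt t) =? 0)))))).
Definition p_ok := PComp p_and [PComp p_valid [PProj 0]; PComp p_and [PComp p_sg [PProj 0];
  PComp p_and [PComp p_eq [PComp p_fst [JtP (PProj 0)]; PProj 1];
  PComp p_and [PComp p_sg [vtP (PProj 0)]; PComp p_and [PComp p_eq [PComp p_fst [PComp p_hd [vtP (PProj 0)]]; PProj 2];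
  PComp p_eq [PComp p_tl [vtP (PProj 0)]; PZero]]]]]].
Lemma s_ok : spec p_ok (fun v => okF (a 0 v) (a 1 v) (a 2 v)).
Proof. mk p_ok. reflexivity. Qed.
#[export] Hint Resolve s_ok : spec.

Section Univ.
Variable p_ltD : prf.
Variable ltF : nat -> nat -> nat.
Hypothesis s_ltD : spec p_ltD (fun v => ltF (a 0 v) (a 1 v)).
#[local] Hint Resolve s_ltD : spec.

Definition leD x y := bor (b2n (x =? y)) (ltF x y).
Definition condF t ne pc := band (okF t ne pc) (bfaN (S t) (fun t1 =>
  bor (nsg (okF t1 ne pc)) (band (b2n (st t1 <=? st t)) (leD (yt t1) (yt t))))).
Definition p_bcond := PComp p_or [PComp p_nsg [PComp p_ok [PProj 0; PProj 2; PProj 3]];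
  PComp p_and [PComp p_le [stP (PProj 0); stP (PProj 1)];
    PComp p_or [PComp p_eq [ytP (PProj 0); ytP (PProj 1)]; PComp p_ltD [ytP (PProj 0); ytP (PProj 1)]]]].
Lemma s_bcond : spec p_bcond (fun v => bor (nsg (okF (a 0 v) (a 2 v) (a 3 v)))
   (band (b2n (st (a 0 v) <=? st (a 1 v))) (leD (yt (a 0 v)) (yt (a 1 v))))).
Proof. mk p_bcond. reflexivity. Qed.
#[local] Hint Resolve s_bcond : spec.
Definition p_cond := PComp p_and [p_ok; PComp (pbfa 3 p_bcond) [PComp p_S [PProj 0]; PProj 0; PProj 1; PProj 2]].
Lemma s_cond : spec p_cond (fun v => condF (a 0 v) (a 1 v) (a 2 v)).
Proof. mk p_cond. reflexivity. Qed.
#[local] Hint Resolve s_cond : spec.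

Definition p_dect := PComp p_nsg [PComp p_eq [PComp p_enc [PComp p_fst [PProj 0]; PComp p_snd [PProj 0]];
   PComp p_fst [PProj 1]]].
Lemma s_dect : spec p_dect (fun v => nsg (b2n (enc (cfst (a 0 v)) (csnd (a 0 v)) =? cfst (a 1 v)))).
Proof. mk p_dect. reflexivity. Qed.
Definition p_chk := PComp p_nsg [PComp p_cond [PComp p_snd [PProj 1]; PComp p_fst [PProj 2]; PComp p_snd [PProj 2]]].
Lemma s_chk : spec p_chk (fun v => nsg (condF (csnd (a 1 v)) (cfst (a 2 v)) (csnd (a 2 v)))).
Proof. mk p_chk. reflexivity. Qed.
Definition p_yt := ytP (PComp p_snd [PProj 0]).
Lemma s_yt : spec p_yt (fun v => yt (csnd (a 0 v))).
Proof. mk p_yt. reflexivity. Qed.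
Definition p_out := PComp p_add [p_yt; PMu p_chk].
Definition u_prog := PComp p_out [PProj 0; PMu p_dect].

Lemma enc_inj n pc n' pc' : enc n pc = enc n' pc' -> n = n' /\ pc = pc'.
Proof. unfold enc. intro H.
  assert (H0: forall n pc, 2 <= 2 ^ n * (2 * pc + 3)).
  { intros. pose proof (Nat.pow_nonzero 2 n0). nia. }
  assert (E : 2 ^ n * (2 * pc + 3) = 2 ^ n' * (2 * pc' + 3)) by (pose proof (H0 n pc); pose proof (H0 n' pc'); lia).
  clear H H0. revert n' E. induction n; intros n' E; destruct n'; simpl in E.
  - split; auto; lia.
  - exfalso. rewrite Nat.add_0_r in E. lia.
  - exfalso. rewrite Nat.add_0_r in E. lia.
  - rewrite !Nat.add_0_r in E. destruct (IHn n'). nia. auto. Qed.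

Lemma u_eval z n : eval u_prog [z] n <-> exists w, enc (cfst w) (csnd w) = cfst z /\
   condF (csnd z) (cfst w) (csnd w) <> 0 /\ n = yt (csnd z).
Proof. split.
  - intro H. unfold u_prog in H. apply inv_comp in H. destruct H as [ys [Hs Hf]].
    apply inv_cons in Hs. destruct Hs as [y1 [ys1 [-> [Hp Hs]]]]. apply inv_proj in Hp. simpl in Hp. subst y1.
    apply inv_cons in Hs. destruct Hs as [w [ys2 [-> [Hw Hs]]]]. apply inv_nil in Hs. subst ys2.
    exists w. apply inv_mu in Hw. destruct Hw as [Hw _].
    pose proof (spec_det _ _ _ _ s_dect Hw) as E1. unfold a in E1; simpl in E1.
    unfold p_out in Hf. apply inv_comp in Hf. destruct Hf as [ys [Hs Hf]].
    apply inv_cons in Hs. destruct Hs as [y1 [ys1 [-> [Hy Hs]]]].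
    apply inv_cons in Hs. destruct Hs as [k [ys2 [-> [Hk Hs]]]]. apply inv_nil in Hs. subst ys2.
    pose proof (spec_det _ _ _ _ s_add Hf) as E2. unfold a in E2; simpl in E2.
    pose proof (spec_det _ _ _ _ s_yt Hy) as E3. unfold a in E3; simpl in E3.
    apply inv_mu in Hk. destruct Hk as [Hk Hall].
    pose proof (spec_det _ _ _ _ s_chk Hk) as E4. unfold a in E4; simpl in E4.
    split. destruct (Nat.eqb_spec (enc (cfst w) (csnd w)) (cfst z)); auto. simpl in E1; discriminate.
    split. destruct (condF (csnd z) (cfst w) (csnd w)); simpl in E4; discriminate || lia.
    destruct k. lia. destruct (Hall 0 ltac:(lia)) as [k' [Hk1 Hk2]].
    pose proof (spec_det _ _ _ _ s_chk Hk2) as E5. unfold a in E5; simpl in E5. lia.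
  - intros [w [H1 [H2 H3]]]. subst n. econstructor. constructor. constructor. constructor.
    + constructor. pose proof (s_dect (w :: [z])). unfold a in H; simpl in H. rewrite H1, Nat.eqb_refl in H. exact H.
      intros m Hm. exists 1. split; auto. pose proof (s_dect (m :: [z])). unfold a in H; simpl in H.
      destruct (Nat.eqb_spec (enc (cfst m) (csnd m)) (cfst z)).
      * rewrite <- H1 in e. apply enc_inj in e. destruct e as [e1 e2]. rewrite <- (pair_fs m), <- (pair_fs w) in Hm.
        rewrite e1, e2 in Hm. lia.
      * exact H.
    + constructor.
    + unfold p_out. econstructor. constructor. apply s_yt. constructor. constructor.
      pose proof (s_chk (0 :: [z; w])). unfold a in H; simpl in H.
      destruct (condF (csnd z) (cfst w) (csnd w)). lia. exact H. intros; lia. constructor.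
      pose proof (s_add [yt (csnd (a 0 [z; w])); 0]). unfold a in *; simpl in *. rewrite Nat.add_0_r in H. exact H.
Qed.
End Univ.
Lemma okF_iff t ne pc : okF t ne pc <> 0 <-> validF t <> 0 /\ t <> 0 /\ cfst (Jt t) = ne /\
  vt t <> 0 /\ cfst (chd (vt t)) = pc /\ ctl (vt t) = 0.
Proof. unfold okF. rewrite !band_nz, !sg_nz, !eqb_nz. tauto. Qed.

Lemma ccons_hd_tl z : z <> 0 -> ccons (chd z) (ctl z) = z.
Proof. destruct z. tauto. intros _. unfold ccons, chd, ctl. simpl. rewrite pair_fs. reflexivity. Qed.

Lemma ok_sound t e pc : okF t (code e) pc <> 0 -> eval e [npair pc (st t)] (yt t).
Proof. rewrite okF_iff. intros [HV [Ht [H1 [H2 [H3 H4]]]]].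
  assert (Hc : 0 < clen t).
  { rewrite <- (ldec_ok t) in Ht. rewrite <- (ldec_ok t). rewrite clen_lcode. destruct (ldec t); simpl in *; lia. }
  eapply (sound t HV 0 Hc). change (cnth 0 t) with (chd t). fold (Jt t).
  rewrite <- (pair_fs (Jt t)). unfold jc. f_equal. auto. fold (vt t) (yt t).
  rewrite <- (pair_fs (csnd (Jt t))). f_equal. fold (vt t). simpl lcode.
  rewrite <- (ccons_hd_tl (vt t)) by auto. rewrite H4. f_equal. rewrite <- (pair_fs (chd (vt t))). rewrite H3. reflexivity. Qed.

Lemma ok_complete e pc s y : eval e [npair pc s] y -> exists t, okF t (code e) pc <> 0 /\ st t = s /\ yt t = y.
Proof. intro H. apply complete in H. destruct H as [Ls [G [h [Ls' E]]]].
  exists (lcode Ls). assert (HJ : Jt (lcode Ls) = jc (code e) (lcode [npair pc s]) y).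
  { unfold Jt. subst Ls. simpl lcode. rewrite chd_cons, fst_pair. reflexivity. }
  assert (HV : vt (lcode Ls) = ccons (npair pc s) 0). { unfold vt. rewrite HJ. unfold jc. rewrite snd_pair, fst_pair. reflexivity. }
  rewrite okF_iff. unfold st, yt. rewrite HV, HJ. unfold jc. rewrite !snd_pair, !fst_pair, chd_cons, ctl_cons, fst_pair, snd_pair.
  repeat split; auto. apply good_valid; auto. subst Ls. simpl. unfold ccons. lia. unfold ccons. lia. Qed.

Lemma bcode_prefix n p : bcode (repeat true n ++ false :: p) = enc n (bcode p).
Proof. unfold enc. induction n; simpl repeat; simpl app; simpl bcode.
  - simpl. lia.
  - rewrite IHn. rewrite Nat.pow_succ_r'. pose proof (Nat.pow_nonzero 2 n). nia. Qed.

Lemma max_index (P : nat -> Prop) (S' : nat -> nat) t0 : P t0 ->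
  exists t, t <= t0 /\ P t /\ forall t1, t1 <= t0 -> P t1 -> S' t1 <= S' t.
Proof.
  enough (forall t0, (exists t, t <= t0 /\ P t) -> exists t, t <= t0 /\ P t /\ forall t1, t1 <= t0 -> P t1 -> S' t1 <= S' t).
  { intros; apply H; eauto. }
  clear t0. induction t0; intros [t [Ht HP]].
  - exists 0. replace t with 0 in * by lia. split; auto. split; auto. intros t1 H1 _. replace t1 with 0 by lia; auto.
  - destruct (classic (exists t, t <= t0 /\ P t)) as [Hex|Hnex].
    + destruct (IHt0 Hex) as [t' [H1 [H2 H3]]].
      destruct (classic (P (S t0))) as [HS|HS].
      * destruct (Nat.le_gt_cases (S' (S t0)) (S' t')).
        -- exists t'. split; [lia|]. split; auto. intros t1 Ht1 Hp1. destruct (Nat.eq_dec t1 (S t0)). subst; auto. apply H3; auto; lia.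
        -- exists (S t0). split; auto. split; auto. intros t1 Ht1 Hp1. destruct (Nat.eq_dec t1 (S t0)). subst; auto.
           pose proof (H3 t1 ltac:(lia) Hp1). lia.
      * exists t'. split; [lia|]. split; auto. intros t1 Ht1 Hp1. destruct (Nat.eq_dec t1 (S t0)). subst; tauto. apply H3; auto; lia.
    + assert (t = S t0). { destruct (Nat.eq_dec t (S t0)); auto. exfalso; apply Hnex; exists t; split; auto; lia. }
      subst. exists (S t0). split; auto. split; auto. intros t1 Ht1 Hp1. destruct (Nat.eq_dec t1 (S t0)). subst; auto.
      exfalso; apply Hnex; exists t1; split; auto; lia.
Qed.

Lemma filter_list {D : Type} (P : D -> Prop) (l : list D) : (forall x, P x -> In x l) ->
  exists l', forall x, P x <-> In x l'.
Proof. revert P; induction l; intros P H. exists []. intros x; split; intro Hx. apply (H x Hx). destruct Hx.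
  destruct (IHl (fun x => P x /\ x <> a0)) as [l' Hl']. intros x [Hx Hne]. destruct (H x Hx); auto. congruence.
  destruct (classic (P a0)).
  - exists (a0 :: l'). intro x. simpl. rewrite <- Hl'. split. intro Hx. destruct (classic (a0 = x)); auto.
    intros [<-|[Hx _]]; auto.
  - exists l'. intro x. rewrite <- Hl'. split. intro Hx; split; auto; congruence. tauto. Qed.

Section MaxEq.
Variable D : Type.
Variable lt : D -> D -> Prop.
Hypothesis irr : forall x, ~ lt x x.
Hypothesis trans : forall x y z, lt x y -> lt y z -> lt x z.
Definition leq x y := x = y \/ lt x y.
Lemma leq_trans x y z : leq x y -> leq y z -> leq x z.
Proof. unfold leq. intros [->|H1] [->|H2]; eauto. Qed.
Lemma leq_antisym x y : leq x y -> leq y x -> x = y.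
Proof. unfold leq. intros [->|H1] [H2|H2]; auto. exfalso; apply (irr x); eauto. Qed.

Definition maxprop (V : D -> Prop) d :=
  (exists l : list D, forall d', V d' <-> In d' l) /\ V d /\ (forall d', V d' -> d' = d \/ lt d' d).

Variable f : nat -> option D.
Hypothesis fmono : forall t t' d d', t <= t' -> f t = Some d -> f t' = Some d' -> leq d d'.
Variable Vu : D -> Prop.
Hypothesis HA : forall x, Vu x -> exists s, f s = Some x.
Hypothesis HB : forall s d0, f s = Some d0 -> exists s' d, s <= s' /\ f s' = Some d /\ Vu d /\ leq d0 d.

Lemma max_equiv d : maxprop Vu d <-> maxprop (fun x => exists s, f s = Some x) d.
Proof. split.
  - intros [[lu Hlu] [Hd Hmax]]. destruct (HA d Hd) as [s1 Hs1].
    assert (Hle : forall x, (exists s, f s = Some x) -> leq x d).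
    { intros x [s Hs]. destruct (HB s x Hs) as [s' [d' [_ [_ [Hv Hl]]]]]. eapply leq_trans. exact Hl. apply Hmax; auto. }
    split; [|split; eauto].
    exists (d :: flat_map (fun s => match f s with Some x => [x] | None => [] end) (seq 0 s1)).
    intro x. simpl. rewrite in_flat_map. split.
    + intros [s Hs]. destruct (Nat.lt_ge_cases s s1).
      * right. exists s. split. apply in_seq; lia. rewrite Hs. simpl; auto.
      * left. apply leq_antisym. eapply fmono; eauto. apply Hle; eauto.
    + intros [<-|[s [_ Hs]]]. eauto. destruct (f s) eqn:E; simpl in Hs; [|tauto]. destruct Hs as [<-|[]]. eauto.
  - intros [[lf Hlf] [[s0 Hs0] Hmax]].
    destruct (filter_list Vu lf) as [l Hl]. { intros x Hx. apply Hlf. auto. }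
    split; [eauto|]. destruct (HB s0 d Hs0) as [s' [d' [_ [Hs' [Hv Hl']]]]].
    assert (d' = d). { apply leq_antisym. apply Hmax; eauto. auto. } subst d'.
    split; [auto|]. intros x Hx. apply Hmax. apply HA. auto. Qed.

Lemma maxprop_uniq V d d' : maxprop V d -> maxprop V d' -> d = d'.
Proof. intros [_ [H1 H2]] [_ [H3 H4]]. apply leq_antisym; [apply H4|apply H2]; auto. Qed.
End MaxEq.

Definition ofProg {D : Type} (rho : nat -> D) (P : prf) (q : list bool) (t : nat) : option D :=
  match excluded_middle_informative (exists n, eval P [npair (bcode q) t] n) with
  | left H => Some (rho (proj1_sig (constructive_indefinite_description _ H)))
  | right _ => None end.

Lemma ofProg_spec {D : Type} (rho : nat -> D) P q t d :
  ofProg rho P q t = Some d <-> exists n, eval P [npair (bcode q) t] n /\ d = rho n.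
Proof. unfold ofProg. destruct excluded_middle_informative as [H|H].
  - destruct (constructive_indefinite_description _ H) as [n Hn]. simpl. split.
    + intro E. injection E; intros <-. eauto.
    + intros [n' [Hn' ->]]. rewrite (det _ _ _ Hn _ Hn'). reflexivity.
  - split. discriminate. intros [n [Hn _]]. exfalso; eauto. Qed.

Lemma ofProg_pc2 {D : Type} (rho : nat -> D) P : (forall m n, rho m = rho n -> m = n) -> pc2 rho (ofProg rho P).
Proof. intro Hinj. exists P. intros p t n. rewrite ofProg_spec. split. eauto.
  intros [n' [Hn' E]]. rewrite (Hinj _ _ E). auto. Qed.

Lemma least_exists (P : nat -> Prop) : (exists n, P n) -> exists n, P n /\ forall m, P m -> n <= m.
Proof. intros [n Hn]. induction n as [n IH] using lt_wf_ind.
  destruct (classic (exists m, m < n /\ P m)) as [[m [Hm HPm]]|Hno].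
  - apply (IH m Hm HPm).
  - exists n. split; auto. intros m Hm. destruct (Nat.lt_ge_cases m n); auto. exfalso; eauto. Qed.

Lemma KC_exists {D : Type} (phi : list bool -> option D) d p : phi p = Some d ->
  exists k, KC phi d k /\ k <= length p.
Proof. intro H. destruct (least_exists (fun k => exists p, phi p = Some d /\ length p = k)) as [k [[p' [H1 H2]] H3]]. eauto.
  exists k. split. split. eauto. intros p0 Hp0. apply H3. eauto. apply H3. eauto. Qed.
Lemma cond_gen (OK Sf Y : nat -> nat) (lf : nat -> nat -> nat) t :
  band (OK t) (bfaN (S t) (fun t1 => bor (nsg (OK t1)) (band (b2n (Sf t1 <=? Sf t))
     (bor (b2n (Y t1 =? Y t)) (lf (Y t1) (Y t)))))) <> 0 <->
  OK t <> 0 /\ forall t1, t1 <= t -> OK t1 <> 0 -> Sf t1 <= Sf t /\ (Y t1 = Y t \/ lf (Y t1) (Y t) <> 0).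
Proof. rewrite band_nz, bfaN_nz. split.
  - intros [H1 H2]. split; auto. intros t1 Ht1 Hok. specialize (H2 t1 ltac:(lia)).
    apply bor_nz in H2. destruct H2 as [H2|H2]. apply nsg_nz in H2; tauto.
    apply band_nz in H2. destruct H2 as [H2 H3]. apply b2n_nz, Nat.leb_le in H2. split; auto.
    apply bor_nz in H3. destruct H3 as [H3|H3]; auto. left. apply eqb_nz; auto.
  - intros [H1 H2]. split; auto. intros t1 Ht1. apply bor_nz.
    destruct (Nat.eq_dec (OK t1) 0). left. apply nsg_nz; auto. right.
    destruct (H2 t1 ltac:(lia) n) as [H3 H4]. apply band_nz. split. apply b2n_nz, Nat.leb_le; auto.
    apply bor_nz. destruct H4; [left; apply eqb_nz|right]; auto. Qed.

Theorem mainTheorem5 (D : Type) (lt : D -> D -> Prop) (rho : nat -> D)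
  (HD : @computable_poset D lt rho) :
  exists U, MaxPR lt rho U /\
    forall F, MaxPR lt rho F ->
      exists c : nat, forall d : D, (exists p, F p = Some d) ->
        exists kU kF, KC U d kU /\ KC F d kF /\ kU <= kF + c.
Proof.
  destruct HD as [irr trans inj surj [elt Helt]].
  set (ltF := fun m n => if excluded_middle_informative (lt (rho m) (rho n)) then 1 else 0).
  set (pl := PComp elt [p_pair]).
  assert (Hpl : spec pl (fun v => ltF (a 0 v) (a 1 v))).
  { intro v. econstructor. constructor. apply s_pair. constructor. simpl.
    unfold ltF. destruct excluded_middle_informative; apply Helt; auto. }
  set (u := ofProg rho (u_prog pl)).
  assert (Hu : forall q t d, u q t = Some d <-> exists w, enc (cfst w) (csnd w) = bcode q /\
            condF ltF t (cfst w) (csnd w) <> 0 /\ d = rho (yt t)).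
  { intros q t d. unfold u. rewrite ofProg_spec. setoid_rewrite (u_eval pl ltF Hpl).
    rewrite fst_pair, snd_pair. split.
    - intros [n [[w [H1 [H2 H3]]] ->]]. subst. eauto.
    - intros [w [H1 [H2 ->]]]. eauto 10. }
  assert (HltF : forall x y, ltF x y <> 0 <-> lt (rho x) (rho y)).
  { intros x y. unfold ltF. destruct excluded_middle_informative; split; intros; auto; lia. }
  assert (Hcond : forall t ne pc, condF ltF t ne pc <> 0 <-> okF t ne pc <> 0 /\
     forall t1, t1 <= t -> okF t1 ne pc <> 0 -> st t1 <= st t /\ (yt t1 = yt t \/ lt (rho (yt t1)) (rho (yt t)))).
  { intros t ne pc. unfold condF, leD. rewrite (cond_gen (fun t => okF t ne pc) st yt ltF t).
    setoid_rewrite HltF. tauto. }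
  set (U := fun q => match excluded_middle_informative (exists d, maxprop D lt (fun x => exists t, u q t = Some x) d) with
     | left H => Some (proj1_sig (constructive_indefinite_description _ H)) | right _ => None end).
  assert (HU : forall q d, U q = Some d <-> maxprop D lt (fun x => exists t, u q t = Some x) d).
  { intros q d. unfold U. destruct excluded_middle_informative as [H|H].
    - destruct (constructive_indefinite_description _ H) as [d' Hd']. simpl. split.
      + intro E; injection E; intros <-; auto.
      + intro Hd. f_equal. eapply maxprop_uniq; eauto.
    - split. discriminate. intro Hd; exfalso; eauto. }
  assert (Hw : forall w w', enc (cfst w) (csnd w) = enc (cfst w') (csnd w') -> cfst w = cfst w' /\ csnd w = csnd w').
  { intros w w' E. apply enc_inj in E. auto. }
  exists U. split.
  { exists u. split. apply ofProg_pc2; auto. split.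
    - intros q t t' d d' Htt Hd Hd'. apply Hu in Hd, Hd'.
      destruct Hd as [w [E1 [C1 ->]]]. destruct Hd' as [w' [E2 [C2 ->]]].
      rewrite <- E2 in E1. destruct (Hw _ _ E1) as [F1 F2]. rewrite F1, F2 in C1.
      apply Hcond in C1, C2. destruct C2 as [_ C2]. destruct (C2 t Htt (proj1 C1)) as [_ [->|Hl]]; auto.
    - intros q d. exact (HU q d). }
  intros F [f [[e He] [Hmono HF]]]. exists (S (code e)). intros d [p Hp].
  destruct (KC_exists F d p Hp) as [kF [HkF _]].
  destruct HkF as [[p0 [Hp0 Hl0]] Hmin]. 
  set (q0 := repeat true (code e) ++ false :: p0).
  assert (Huq : forall t x, u q0 t = Some x <-> condF ltF t (code e) (bcode p0) <> 0 /\ x = rho (yt t)).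
  { intros t x. rewrite Hu. unfold q0. rewrite bcode_prefix. split.
    - intros [w [E [C ->]]]. apply enc_inj in E. destruct E as [E1 E2]. rewrite E1, E2 in C. auto.
    - intros [C ->]. exists (npair (code e) (bcode p0)). rewrite fst_pair, snd_pair. auto. }
  assert (HUq : U q0 = Some d).
  { apply HU. apply (max_equiv D lt irr trans (f p0)).
    - intros t t' d1 d2 Ht H1 H2. exact (Hmono p0 t t' d1 d2 Ht H1 H2).
    - intros x [t Ht]. apply Huq in Ht. destruct Ht as [C ->]. apply Hcond in C. destruct C as [C _].
      exists (st t). apply He. apply ok_sound; auto.
    - intros s d0 Hs. destruct (surj d0) as [y <-]. apply He in Hs. apply ok_complete in Hs.
      destruct Hs as [t0 [Hok0 [Hst Hyt]]].
      destruct (max_index (fun t => okF t (code e) (bcode p0) <> 0) st t0 Hok0) as [ts [Hts [Hoks Hmx]]].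
      assert (Hfs : forall t, okF t (code e) (bcode p0) <> 0 -> f p0 (st t) = Some (rho (yt t))).
      { intros t Ht. apply He. apply ok_sound; auto. }
      exists (st ts), (rho (yt ts)). split. rewrite <- Hst. apply Hmx; auto. split. auto. split.
      + exists ts. apply Huq. split; auto. apply Hcond. split; auto. intros t1 Ht1 Hok1.
        assert (st t1 <= st ts) by (apply Hmx; auto; lia). split; auto.
        destruct (Hmono p0 _ _ _ _ H (Hfs t1 Hok1) (Hfs ts Hoks)) as [E|E]; auto.
      + rewrite <- Hyt. apply (Hmono p0 (st t0) (st ts)); auto.
    - apply HF. auto. }
  destruct (KC_exists U d q0 HUq) as [kU [HkU HkUl]].
  exists kU, kF. split; auto. split. split; eauto. 
  unfold q0 in HkUl. rewrite length_app, repeat_length in HkUl. simpl in HkUl. lia.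
Qed.
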